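(* Let $\varLambda\subseteq\mathbb{Z}$ be relatively dense in $\mathbb{R}$, and assume that the density autocorrelation $\gamma:=\gamma_{\mathrm{dens}}$ of $\varLambda$ exists with respect to $\mathcal{A}=([-n,n])_n$. For each $n\ge3$ set $\varGamma_n=n!+(\varLambda\cap[-n,n])$ and define $\varGamma=\bigcup_{n\ge3}\varGamma_n$ (a disjoint union). Then, with respect to $\mathcal{A}$: (a) the density of $\varGamma$ exists and equals $0$, i.e. $\lim_{n\to\infty}\frac{\mathrm{card}(\varGamma\cap[-n,n])}{2n}=0$; (b) the counting autocorrelation of $\varGamma$ exists and $\gamma_{\mathrm{count}}=C\gamma$, where $C=\frac{1}{\gamma(\{0\})}=\frac{1}{\mathrm{dens}(\varLambda)}\neq0$, with $\mathrm{dens}(\varLambda)=\lim_{n\to\infty}\frac{\mathrm{card}(\varLambda\cap[-n,n])}{2n}$.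
   Context: For a locally finite $X\subseteq\mathbb{R}$ and $A_n=[-n,n]$, let $F_n=X\cap A_n$. The density autocorrelation of $X$ is the vague limit (convergence on all compactly supported continuous functions) $\gamma_{\mathrm{dens}}=\lim_n\frac{1}{2n}\sum_{x,y\in F_n}\delta_{x-y}$, and the counting autocorrelation is the vague limit $\gamma_{\mathrm{count}}=\lim_n\gamma_{F_n}$, where $\gamma_F=\frac{1}{\mathrm{card}(F)}\sum_{x,y\in F}\delta_{x-y}$ for finite nonempty $F$ and $\gamma_\emptyset=0$. Relatively dense means there is $R>0$ such that every interval of length $R$ meets $\varLambda$. *)

(* Defs.v *)
From HB Require Import structures.
From mathcomp Require Import all_boot all_order all_algebra.
From mathcomp Require Import all_classical all_reals all_analysis.
Set Implicit Arguments. Unset Strict Implicit. Unset Printing Implicit Defensive.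
Import Order.TTheory GRing.Theory Num.Theory.
Import numFieldNormedType.Exports.
Local Open Scope classical_set_scope.
Local Open Scope ring_scope.

(* Point sets X ⊆ ℤ ⊆ ℝ are represented by X : set int (embedded via intr). *)

Definition window (n : nat) : seq int :=
  [seq (i%:Z - n%:Z) | i <- iota 0 (2 * n).+1].

Definition Fwin (X : set int) (n : nat) : seq int :=
  [seq k <- window n | k \in X].

Definition dens_seq (R : realType) (X : set int) (n : nat) : R :=
  (size (Fwin X n))%:R / (2 * n)%:R.

(* Pairing of a finite sum of Dirac measures sum_{x,y in F} delta_{x-y}
   with a test function f. *)
Definition pair_sum (R : realType) (F : seq int) (f : R -> R) : R :=
  \sum_(x <- F) \sum_(y <- F) f ((x - y)%:~R).

Definition dens_autocorr_seq (R : realType) (X : set int) (f : R -> R)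
  (n : nat) : R :=
  pair_sum (Fwin X n) f / (2 * n)%:R.

Definition count_autocorr_seq (R : realType) (X : set int) (f : R -> R)
  (n : nat) : R :=
  if size (Fwin X n) == 0%N then 0
  else pair_sum (Fwin X n) f / (size (Fwin X n))%:R.

Definition Cc (R : realType) (f : R -> R) : Prop :=
  continuous f /\ exists M : R, forall x : R, M < `|x| -> f x = 0.

Definition vague_cvg (R : realType) (mu : (R -> R) -> nat -> R)
  (gamma : {measure set R -> \bar R}) : Prop :=
  forall f : R -> R, Cc f ->
    gamma.-integrable setT (fun x => (f x)%:E) /\
    mu f @ \oo --> fine (\int[gamma]_x (f x)%:E).

Definition rel_dense (R : realType) (X : set int) : Prop :=
  exists R0 : R, 0 < R0 /\
    forall a : R, exists k : int, X k /\ a <= k%:~R <= a + R0.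

Definition Gamma_set (L : set int) : set int :=
  [set z | exists n : nat, (3 <= n)%N /\ L (z - (n`!)%:Z) /\
                           `|z - (n`!)%:Z| <= n%:Z].

(* Main.v *)
Require Import Defs.
From HB Require Import structures.
From mathcomp Require Import all_boot all_order all_algebra.
From mathcomp Require Import all_classical all_reals all_analysis.
From mathcomp Require Import zify ring lra.
Import Order.TTheory GRing.Theory Num.Theory.
Import numFieldNormedType.Exports.
Local Open Scope classical_set_scope.
Local Open Scope ring_scope.
Lemma mem_window n z : (z \in window n) = (`|z| <= n%:Z).
Proof.
apply/mapP/idP => [[i]|h].
  rewrite mem_iota add0n => /andP[_ hi] ->; lia.
exists (absz (z + n%:Z)); last by lia.
rewrite mem_iota add0n; apply/andP; split => //; lia.
Qed.

Lemma uniq_window n : uniq (window n).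
Proof. rewrite map_inj_uniq ?iota_uniq // => i j /= h; lia. Qed.

Lemma size_window n : size (window n) = (2 * n).+1.
Proof. by rewrite size_map size_iota. Qed.

Lemma mem_Fwin X n z : (z \in Fwin X n) = (`|z| <= n%:Z) && (z \in X).
Proof. by rewrite mem_filter andbC mem_window. Qed.

Lemma uniq_Fwin X n : uniq (Fwin X n).
Proof. exact/filter_uniq/uniq_window. Qed.

Lemma size_Fwin_le X n : (size (Fwin X n) <= (2 * n).+1)%N.
Proof. by rewrite -(size_window n) size_filter count_size. Qed.

Lemma size_near (s : seq int) (x : int) (W : nat) : uniq s ->
  (size [seq y <- s | (`|x - y| <= W%:Z)%R] <= (2 * W).+1)%N.
Proof.
move=> us; have -> : (2 * W).+1 = size [seq x - z | z <- window W].
  by rewrite size_map size_window.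
apply: uniq_leq_size; first by rewrite filter_uniq.
move=> y; rewrite mem_filter => /andP[h _]; apply/mapP; exists (x - y).
  by rewrite mem_window.
lia.
Qed.

Lemma sum_const_seq (R : numDomainType) (T : Type) (s : seq T) (P : pred T) (c : R) :
  \sum_(i <- s | P i) c = c * (count P s)%:R.
Proof.
elim: s => [|x s IH]; first by rewrite big_nil mulr0.
rewrite big_cons /= IH; case: (P x) => /=; last by rewrite add0n.
by rewrite natrD mulrDr mulr1.
Qed.

Lemma fact_ge6 a : (3 <= a)%N -> (6 <= a`!)%N.
Proof.
elim: a => // a IH; rewrite leq_eqVlt => /orP[/eqP <-|] //.
rewrite ltnS => /IH h; rewrite factS; set F := a`! in h *; nia.
Qed.

Lemma fact_ge2a a : (3 <= a)%N -> (2 * a <= a`!)%N.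
Proof.
elim: a => // a IH; rewrite leq_eqVlt => /orP[/eqP <-|] //.
rewrite ltnS => /[dup] a3 /IH h; rewrite factS; set F := a`! in h *; nia.
Qed.

Lemma fact_step c : (3 <= c)%N -> (c`! + c + 2 * c.+1 <= c.+1`!)%N.
Proof. move=> h; have := @fact_ge6 c h; rewrite factS; set F := c`!; nia. Qed.

Lemma fact_gap a b : (3 <= a)%N -> (a < b)%N -> (a`! + a + 2 * b <= b`!)%N.
Proof.
move=> a3; elim: b => // b IH; rewrite ltnS leq_eqVlt => /orP[/eqP <-|].
  exact: fact_step.
move=> /[dup] ab /IH h.
have b3 : (3 <= b)%N by lia.
have hb := @fact_step b b3.
set F := a`! in h hb *; set G := b`! in h hb *; set H := b.+1`! in h hb *; lia.
Qed.

Lemma fact_mono a b : (3 <= a)%N -> (a <= b)%N -> (a`! - a <= b`! - b)%N.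
Proof.
move=> a3; rewrite leq_eqVlt => /orP[/eqP <-//|ab].
have := @fact_gap a b a3 ab; set F := a`!; set G := b`!; lia.
Qed.

Lemma fact_cube a : (6 <= a)%N -> (a ^ 3 <= a`!)%N.
Proof.
elim: a => // a IH; rewrite leq_eqVlt => /orP[/eqP <-|] //.
rewrite ltnS => /[dup] a6 /IH h; rewrite factS; set F := a`! in h *; nia.
Qed.

Lemma blockA N : (3 <= N)%N ->
  exists A, [/\ (3 <= A)%N, (A`! - A <= N)%N & (N < A.+1`! - A.+1)%N].
Proof.
move=> hN; have [k ->] : exists k, N = (k + 3)%N by exists (N - 3)%N; lia.
elim: k => [|k [A [A3 h1 h2]]]; first by exists 3%N.
case: (ltnP (k.+1 + 3) (A.+1`! - A.+1)) => h.
  by exists A; split => //; lia.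
exists A.+1; split => //; first lia.
have h3 : (3 <= A.+1)%N by lia.
have := @fact_step A.+1 h3; set F := A.+1`! in h2 h *; set G := A.+2`!; lia.
Qed.

Lemma blockA_ge A0 A N : (3 <= A0)%N -> (A0`! - A0 <= N)%N ->
  (N < A.+1`! - A.+1)%N -> (3 <= A)%N -> (A0 <= A)%N.
Proof.
move=> h0 h1 h2 h3; rewrite leqNgt; apply/negP => hlt.
have h4 : (3 <= A.+1)%N by lia.
have := @fact_mono A.+1 A0 h4 hlt; set F := A.+1`! in h2 *; set G := A0`! in h1 *; lia.
Qed.
Definition inblk (a : nat) (z : int) : bool := (`|z - (a`!)%:Z| <= a%:Z)%R.
Definition Tb (L : set int) (a N : nat) : seq int :=
  [seq j <- Fwin L a | ((a`!)%:Z + j <= N%:Z)%R].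
Definition blk (L : set int) (a N : nat) : seq int :=
  [seq (a`!)%:Z + j | j <- Tb L a N].

Lemma inblk_uniq a b z : (3 <= a)%N -> (3 <= b)%N -> inblk a z -> inblk b z -> a = b.
Proof.
rewrite /inblk => a3 b3 ha hb.
case: (ltngtP a b) => // hab.
- have := @fact_gap a b a3 hab; set F := a`! in ha *; set G := b`! in hb *; lia.
- have := @fact_gap b a b3 hab; set F := a`! in ha *; set G := b`! in hb *; lia.
Qed.

Arguments inblk_uniq {a b z}.

Lemma inblk_pos a z : (3 <= a)%N -> inblk a z -> (a%:Z <= z)%R.
Proof. rewrite /inblk => a3 h; have := @fact_ge2a a a3; set F := a`! in h *; lia. Qed.

Arguments inblk_pos {a z}.

Lemma mem_blk L a N x : x \in blk L a N ->
  exists j, [/\ x = (a`!)%:Z + j, (`|j| <= a%:Z)%R, ((a`!)%:Z + j <= N%:Z)%R & L j].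
Proof.
case/mapP => j; rewrite mem_filter mem_Fwin => /and3P[h1 h2 h3] ->.
by exists j; split => //; exact: set_mem.
Qed.

Arguments mem_blk {L a N x}.

Lemma perm_blk L a N : (3 <= a)%N ->
  perm_eq [seq z <- Fwin (Gamma_set L) N | inblk a z] (blk L a N).
Proof.
move=> a3; apply: uniq_perm.
- by rewrite filter_uniq // uniq_Fwin.
- rewrite map_inj_uniq; [by rewrite filter_uniq // uniq_Fwin | exact: addrI].
move=> z; rewrite mem_filter mem_Fwin; apply/idP/mapP.
  case/and3P => hin hz /set_mem [b [b3 [hL hb]]].
  have eab := inblk_uniq a3 b3 hin hb; subst b.
  exists (z - (a`!)%:Z); last by rewrite addrC subrK.
  rewrite mem_filter mem_Fwin; apply/andP; split.
    by move: hz; set F := a`!; lia.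
  by apply/andP; split; [move: hin; rewrite /inblk | exact: mem_set].
case=> j; rewrite mem_filter mem_Fwin => /and3P[hN hj hL] ->.
have inb : inblk a ((a`!)%:Z + j) by rewrite /inblk; set F := a`!; lia.
have := @fact_ge2a a a3; set F := a`! in inb hN *.
move=> hF; rewrite inb /=; apply/andP; split; first lia.
apply: mem_set; exists a; split => //; split => //.
  by rewrite -/F [F%:Z + j]addrC addrK; exact: set_mem.
Qed.

Lemma sum_Gamma (V : nmodType) L N (h : int -> V) :
  \sum_(z <- Fwin (Gamma_set L) N) h z =
  \sum_(a <- iota 3 N) \sum_(z <- blk L a N) h z.
Proof.
transitivity (\sum_(z <- Fwin (Gamma_set L) N)
                \sum_(a <- iota 3 N) (if inblk a z then h z else 0)).
  rewrite big_seq [RHS]big_seq; apply: eq_bigr => z hz.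
  move: (hz); rewrite mem_Fwin => /andP[hzN /set_mem [a0 [a03 [_ ha0]]]].
  have a0N : a0 \in iota 3 N.
    by rewrite mem_iota; have := inblk_pos a03 ha0; lia.
  have ha0' : inblk a0 z := ha0.
  rewrite (bigD1_seq a0) ?iota_uniq //= ha0' big1_seq ?addr0 // => a /andP[ha].
  rewrite mem_iota => /andP[a3 _]; case: ifP => // hb.
  by have := inblk_uniq a3 a03 hb ha0' => e; rewrite e eqxx in ha.
rewrite exchange_big /= big_seq [RHS]big_seq; apply: eq_bigr => a.
rewrite mem_iota => /andP[a3 _].
by rewrite -big_mkcond -big_filter; apply: perm_big; exact: perm_blk.
Qed.

Lemma size_blk L a N : size (blk L a N) = size (Tb L a N).
Proof. by rewrite size_map. Qed.

Lemma size_Tb_le L a N : (size (Tb L a N) <= (2 * a).+1)%N.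
Proof. rewrite size_filter; exact: leq_trans (count_size _ _) (size_Fwin_le _ _). Qed.

Lemma Tb_full L a N : (a`! + a <= N)%N -> Tb L a N = Fwin L a.
Proof.
move=> h; apply/all_filterP/allP => j; rewrite mem_Fwin => /andP[hj _].
by move: h; set F := a`!; lia.
Qed.

Lemma Tb_empty L a N : (3 <= a)%N -> (N < a`! - a)%N -> Tb L a N = [::].
Proof.
move=> a3 h; have hF := @fact_ge2a a a3; rewrite /Tb (eq_in_filter (a2 := pred0)) ?filter_pred0 //.
move=> j; rewrite mem_Fwin => /andP[hj _] /=; apply/negP => hc.
by move: h hF hc; set F := a`!; lia.
Qed.

Lemma pair_blk (R : realType) (f : R -> R) L a N :
  \sum_(x <- blk L a N) \sum_(y <- blk L a N) f ((x - y)%:~R) = pair_sum (Tb L a N) f.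
Proof.
rewrite /pair_sum big_map; apply: eq_bigr => j _; rewrite big_map; apply: eq_bigr => k _.
by congr (f _%:~R); lia.
Qed.

Lemma ltW_norm (R : realType) (W : nat) (k : int) :
  (W%:Z < `|k|)%R -> (W%:R : R) < `|(k%:~R : R)|.
Proof. by move=> h; rewrite -intr_norm -[W%:R]/((W%:Z)%:~R : R) ltr_int. Qed.

Section Rows.
Variables (R : realType) (f : R -> R) (W : nat).
Hypothesis hf : forall t : R, W%:R < `|t| -> f t = 0.

Definition Bf := \sum_(k <- window W) `|f k%:~R|.

Lemma Bf_ge0 : 0 <= Bf.
Proof. by apply: sumr_ge0 => *; exact: normr_ge0. Qed.

Lemma f_int_bound k : `|f k%:~R| <= Bf.
Proof.
case: (boolP (k \in window W)) => hk.
  rewrite /Bf (bigD1_seq k) ?uniq_window //= lerDl sumr_ge0 // => *; exact: normr_ge0.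
rewrite hf ?normr0 ?Bf_ge0 //; apply: ltW_norm.
by rewrite mem_window -ltNge in hk.
Qed.

Lemma row_bound (s : seq int) x : uniq s ->
  `|\sum_(y <- s) f ((x - y)%:~R)| <= Bf * ((2 * W).+1)%:R.
Proof.
move=> us.
rewrite (bigID (fun y => (`|x - y| <= W%:Z)%R)) /= [X in _ + X]big1 ?addr0; last first.
  by move=> y; rewrite -ltNge => hy; apply: hf; apply: ltW_norm.
apply: le_trans (ler_norm_sum _ _ _) _.
apply: le_trans (_ : \sum_(y <- s | (`|x - y| <= W%:Z)%R) Bf <= _).
  by apply: ler_sum => y _; exact: f_int_bound.
rewrite sum_const_seq -size_filter; apply: ler_wpM2l; first exact: Bf_ge0.
by rewrite ler_nat; exact: size_near.
Qed.

Lemma pair_bound (s : seq int) : uniq s ->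
  `|pair_sum s f| <= Bf * ((2 * W).+1)%:R * (size s)%:R.
Proof.
move=> us; apply: le_trans (ler_norm_sum _ _ _) _.
apply: le_trans (_ : \sum_(x <- s) (Bf * ((2 * W).+1)%:R) <= _).
  by apply: ler_sum => x _; exact: row_bound.
by rewrite sum_const_seq count_predT.
Qed.

Lemma row_blk L a N x : (3 <= a)%N -> (W < a)%N -> x \in blk L a N ->
  \sum_(y <- Fwin (Gamma_set L) N) f ((x - y)%:~R) =
  \sum_(y <- blk L a N) f ((x - y)%:~R).
Proof.
move=> a3 aW hx; rewrite sum_Gamma.
have [j [-> hj hjN hL]] := mem_blk hx.
have := @fact_ge2a a a3 => hF.
have aN : a \in iota 3 N by rewrite mem_iota; move: hF hjN; set F := a`!; lia.
rewrite (bigD1_seq a) ?iota_uniq //= [X in _ + X]big1_seq ?addr0 // => b /andP[hba].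
rewrite mem_iota => /andP[b3 _].
apply: big1_seq => y /andP[_ /mem_blk [k [-> hk hkN _]]].
apply: hf; apply: ltW_norm.
case: (ltngtP a b) => hab; last by rewrite hab eqxx in hba.
- have := @fact_gap a b a3 hab; move: hj hk; set F := a`!; set G := b`!; lia.
- have := @fact_gap b a b3 hab; move: hj hk; set F := a`!; set G := b`!; lia.
Qed.

End Rows.
Lemma count_iota_lt B m N : (count (fun a => (a < B)%N) (iota m N) <= B)%N.
Proof.
rewrite -size_filter -[X in (_ <= X)%N](size_iota 0 B).
apply: uniq_leq_size; first by rewrite filter_uniq // iota_uniq.
by move=> a; rewrite mem_filter !mem_iota => /andP[h _]; lia.
Qed.

Lemma count_iota_eq A m N : (count (pred1 A) (iota m N) <= 1)%N.
Proof. by rewrite count_uniq_mem ?iota_uniq //; case: (_ \in _). Qed.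

Lemma C_eq L N :
  size (Fwin (Gamma_set L) N) = (\sum_(a <- iota 3 N) size (Tb L a N))%N.
Proof.
rewrite -sum1_size (sum_Gamma nat); apply: eq_bigr => a _.
by rewrite sum1_size size_blk.
Qed.

Lemma sum_odd k : (\sum_(a <- iota 3 k) (2 * a + 1) = (k + 3) * (k + 3) - 9)%N.
Proof.
elim: k => [|k IH]; first by rewrite big_nil.
have -> : iota 3 k.+1 = iota 3 k ++ [:: (3 + k)%N] by rewrite -[k.+1]addn1 iotaD.
by rewrite big_cat /= IH big_seq1; lia.
Qed.

Lemma count_lb (L : set int) (R1 : nat) (b0 : int) :
  (forall b : int, exists k, L k /\ (b <= k < b + R1%:Z)%R) ->
  forall K m, (K <= count (fun i : nat => ((b0 + i%:Z)%R \in L)) (iota m (K * R1)))%N.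
Proof.
move=> hd; elim => [//|K IH] m.
rewrite mulSn iotaD count_cat.
have h1 : (0 < count (fun i : nat => ((b0 + i%:Z)%R \in L)) (iota m R1))%N.
  rewrite -has_count; have [k [hk hb]] := hd (b0 + m%:Z).
  apply/hasP; exists (absz (k - b0)).
    by rewrite mem_iota; lia.
  have -> : (b0 + (absz (k - b0))%:Z)%R = k by lia.
  exact: mem_set.
by have := IH (m + R1)%N; lia.
Qed.

Lemma dense_count (L : set int) (R1 : nat) : (0 < R1)%N ->
  (forall b : int, exists k, L k /\ (b <= k < b + R1%:Z)%R) ->
  forall a, ((2 * a).+1 <= (size (Fwin L a) + 1) * R1)%N.
Proof.
move=> R1p hd a.
set K := ((2 * a).+1 %/ R1)%N.
have hK : (K * R1 <= (2 * a).+1)%N by exact: leq_trunc_div.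
have hK2 : ((2 * a).+1 < K.+1 * R1)%N by exact: ltn_ceil.
have : (K <= size (Fwin L a))%N.
  rewrite size_filter /window count_map.
  rewrite -(subnKC hK) iotaD count_cat.
  apply: leq_trans (leq_addr _ _).
  apply: leq_trans (@count_lb L R1 (- a%:Z) hd K 0) _.
  apply: eq_leq; apply: eq_count => i /=; by rewrite addrC.
move=> hc; apply: leq_trans (ltnW hK2) _; rewrite addn1 leq_mul2r; lia.
Qed.

Lemma C_lower L R1 N A :
  (forall a, ((2 * a).+1 <= (size (Fwin L a) + 1) * R1)%N) ->
  (3 <= A)%N -> (A`! - A <= N)%N -> (2 * R1 + 5 <= A)%N ->
  (A * A <= 2 * R1 * size (Fwin (Gamma_set L) N))%N.
Proof.
move=> hd A3 hAN hAR.
have AN : (A <= N)%N by have := @fact_ge2a A A3; set F := A`! in hAN *; lia.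
have split : iota 3 N = iota 3 (A - 3) ++ iota A (N + 3 - A).
  by rewrite -[X in iota X (N + 3 - A)](subnKC A3) -iotaD; congr iota; lia.
have lb : (\sum_(a <- iota 3 (A - 3)) size (Fwin L a) <= size (Fwin (Gamma_set L) N))%N.
  rewrite C_eq split big_cat /=; apply: leq_trans (leq_addr _ _).
  rewrite big_seq [X in (_ <= X)%N]big_seq; apply: eq_leq; apply: eq_bigr => a.
  rewrite mem_iota => /andP[a3 aA]; rewrite Tb_full //.
  have aA' : (a < A)%N by lia.
  have := @fact_gap a A a3 aA'; set F := a`!; set G := A`! in hAN *; lia.
have hs : ((A - 3 + 3) * (A - 3 + 3) - 9 <=
           R1 * (\sum_(a <- iota 3 (A - 3)) size (Fwin L a) + (A - 3)))%N.
  rewrite -sum_odd -[X in (_ <= R1 * (_ + X))%N](size_iota 3 (A - 3)) -sum1_size.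
  rewrite -big_split /= big_distrr /=; apply: leq_sum => a _.
  by have := hd a; set c := size _; nia.
move: hs lb; set S := (\sum_(_ <- _) _)%N; set C := size _; nia.
Qed.

Lemma C_upper L N A : (3 <= A)%N -> (N < A.+1`! - A.+1)%N ->
  (size (Fwin (Gamma_set L) N) <= A.+1 * (2 * A).+1)%N.
Proof.
move=> A3 hN; rewrite C_eq.
apply: leq_trans (_ : (\sum_(a <- iota 3 N) (if (a < A.+1)%N then (2 * A).+1 else 0) <= _)%N).
  rewrite big_seq [X in (_ <= X)%N]big_seq; apply: leq_sum => a.
  rewrite mem_iota => /andP[a3 _]; case: ltnP => ha.
    by apply: leq_trans (size_Tb_le _ _ _) _; lia.
  rewrite Tb_empty //; apply: leq_trans hN _.
  have h1 : (3 <= A.+1)%N by lia.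
  exact: fact_mono.
rewrite -big_mkcond /= big_const_seq iter_addn_0 mulnC leq_mul2r.
by rewrite count_iota_lt orbT.
Qed.

Lemma full_cond a A N : (3 <= a)%N -> (a < A)%N -> (A`! - A <= N)%N -> (a`! + a <= N)%N.
Proof. move=> a3 haA hAN; have := @fact_gap a A a3 haA; set F := a`!; set G := A`! in hAN *; lia. Qed.

Lemma empty_cond a A N : (3 <= A)%N -> (A < a)%N -> (N < A.+1`! - A.+1)%N -> (N < a`! - a)%N.
Proof.
move=> A3 hAa hNA; apply: leq_trans hNA _.
have h1 : (3 <= A.+1)%N by lia.
exact: fact_mono.
Qed.
Lemma count_cvg (R : realType) (L : set int) (f : R -> R) (W R1 : nat) (Q : R) :
  (forall t : R, W%:R < `|t| -> f t = 0) ->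
  (forall a, ((2 * a).+1 <= (size (Fwin L a) + 1) * R1)%N) ->
  (forall eps : R, 0 < eps -> exists a0, forall a, (a0 <= a)%N ->
      `|pair_sum (Fwin L a) f - Q * (size (Fwin L a))%:R| <=
        eps * (size (Fwin L a))%:R) ->
  count_autocorr_seq (Gamma_set L) f @ \oo --> Q.
Proof.
move=> hf hd hP.
have R1p : (0 < R1)%N.
  by have := hd 0%N; set c := size _; nia.
apply/cvgrPdist_le => e e0.
set eps := e / 2.
have eps0 : 0 < eps by rewrite divr_gt0.
have [ae hae] := hP eps eps0.
set K := @Bf R f W * ((2 * W).+1)%:R.
have K0 : 0 <= K by rewrite mulr_ge0 ?Bf_ge0.
set K' := K + `|Q|.
have K'0 : 0 <= K' by rewrite addr_ge0.
set a1 := (ae + W + 3)%N.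
set Cst := K' * ((2 * a1).+1)%:R * a1%:R.
have Cst0 : 0 <= Cst by rewrite !mulr_ge0.
set X := (2 * R1)%:R * (Cst + 3%:R * K').
set A0 := maxn (2 * R1 + 5 + a1) (Num.trunc (X / eps)).+1.
have hA0 : X / eps < A0%:R.
  apply: lt_le_trans (truncnS_gt _) _; rewrite ler_nat; exact: leq_maxr.
apply: filterS (nbhs_infty_ge (A0`! - A0 + 3)) => N hN.
have [A [A3 hAN hNA]] := @blockA N ltac:(lia).
have A0A : (A0 <= A)%N.
  apply: (@blockA_ge A0 A N) => //; last by lia.
  by have := leq_maxl (2 * R1 + 5 + a1) (Num.trunc (X / eps)).+1; lia.
have A0ge : (2 * R1 + 5 + a1 <= A0)%N by exact: leq_maxl.
have hCl := @C_lower L R1 N A hd A3 hAN ltac:(lia).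
set C := size (Fwin (Gamma_set L) N) in hCl *.
have Apos : (0 < A)%N by lia.
have C0 : (0 < C)%N.
  rewrite lt0n; apply/eqP => c0; move: hCl; rewrite c0 muln0 leqn0 muln_eq0 orbb; lia.
rewrite /count_autocorr_seq -/C (negbTE (lt0n_neq0 C0)).
have Cr0 : 0 < C%:R :> R by rewrite ltr0n.
have main : `|pair_sum (Fwin (Gamma_set L) N) f - Q * C%:R| <= eps * C%:R + Cst + K' * ((2 * A).+1)%:R.
  rewrite /pair_sum (sum_Gamma _ _ _ (fun x => \sum_(y <- Fwin (Gamma_set L) N) f ((x - y)%:~R))).
  rewrite /C C_eq natr_sum mulr_sumr -sumrB.
  apply: le_trans (ler_norm_sum _ _ _) _.
  apply: le_trans (_ : \sum_(a <- iota 3 N)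
     ((if (a < a1)%N then K' * ((2 * a1).+1)%:R else 0) + eps * (size (Tb L a N))%:R +
      (if a == A then K' * ((2 * A).+1)%:R else 0)) <= _).
    rewrite big_seq [X in _ <= X]big_seq; apply: ler_sum => a.
    rewrite mem_iota => /andP[a3 _].
    set ra := \sum_(x <- blk L a N) _.
    set xa := size (Tb L a N).
    have hgen : `|ra - Q * xa%:R| <= K' * xa%:R.
      apply: le_trans (ler_normB _ _) _; rewrite normrM normr_nat mulrDl lerD2r.
      apply: le_trans (ler_norm_sum _ _ _) _.
      apply: le_trans (_ : \sum_(x <- blk L a N) K <= _).
        by apply: ler_sum => x _; apply: row_bound => //; exact: uniq_Fwin.
      by rewrite sum_const_seq count_predT size_blk mulrC.
    have xa_le : (xa <= (2 * a).+1)%N by exact: size_Tb_le.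
    have t1 : 0 <= (if (a < a1)%N then K' * ((2 * a1).+1)%:R else 0).
      by case: ifP => // _; rewrite mulr_ge0.
    have t3 : 0 <= (if a == A then K' * ((2 * A).+1)%:R else 0).
      by case: ifP => // _; rewrite mulr_ge0.
    have t2 : 0 <= eps * xa%:R by rewrite mulr_ge0 // ltW.
    case: (ltnP a a1) => ha1.
      apply: le_trans hgen _; rewrite -addrA ler_wpDr ?addr_ge0 //.
      by rewrite ler_wpM2l // ler_nat; move: xa_le ha1; clear; lia.
    case: (ltngtP a A) => haA.
    -
      have full := @full_cond a A N a3 haA hAN.
      have -> : ra = pair_sum (Fwin L a) f.
        rewrite -(Tb_full L a N full) -(@pair_blk R f L a N) /ra.
        rewrite big_seq [RHS]big_seq; apply: eq_bigr => x hx.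
        have aW : (W < a)%N by move: ha1; rewrite /a1; clear; lia.
        exact: (@row_blk R f W hf L a N x a3 aW hx).
      rewrite /xa Tb_full //.
      have aea : (ae <= a)%N by move: ha1; rewrite /a1; clear; lia.
      apply: le_trans (hae a aea) _.
      by apply: ler_wpDr => //; apply: ler_wpDl.
    -
      have emp : Tb L a N = [::].
        by apply: Tb_empty => //; exact: (@empty_cond a A N A3 haA hNA).
      have -> : ra = 0 by rewrite /ra /blk emp big_nil.
      rewrite /xa emp /= !mulr0 subrr normr0.
      by apply: addr_ge0 => //; apply: addr_ge0 => //; rewrite mulr0.
    -
      apply: le_trans hgen _; rewrite add0r; apply: ler_wpDl => //.
      by rewrite ler_wpM2l // ler_nat -haA.
  rewrite !big_split /= -!mulr_sumr -natr_sum -C_eq -/C.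
  rewrite -big_mkcond -[X in _ + X]big_mkcond /= !sum_const_seq.
  rewrite (addrC (eps * C%:R) Cst); apply: lerD; first apply: lerD => //.
  - by rewrite /Cst ler_wpM2l ?mulr_ge0 // ler_nat count_iota_lt.
  - by rewrite -[X in _ <= X]mulr1 ler_wpM2l ?mulr_ge0 // lern1 count_iota_eq.
have rest : Cst + K' * ((2 * A).+1)%:R <= eps * C%:R.
  have A1 : 1 <= A%:R :> R by rewrite ler1n; lia.
  have R1r : 0 < R1%:R :> R by rewrite ltr0n.
  have e2 : ((2 * A).+1)%:R = 2 * A%:R + 1 :> R by rewrite -addn1 natrD natrM.
  have h1 : Cst + K' * ((2 * A).+1)%:R <= (Cst + 3 * K') * A%:R.
    rewrite e2; nra.
  have h2 : X < eps * A%:R.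
    rewrite -ltr_pdivrMl // mulrC; apply: lt_le_trans hA0 _.
    by rewrite ler_nat.
  have h3 : A%:R * A%:R <= 2 * R1%:R * C%:R :> R.
    by rewrite -natrM -[2]/(2%:R) -!natrM ler_nat.
  have hX : X = 2 * R1%:R * (Cst + 3 * K') by rewrite /X natrM.
  rewrite hX in h2.
  have h4 : 2 * R1%:R * (Cst + K' * ((2 * A).+1)%:R) <= 2 * R1%:R * (eps * C%:R).
    have h5 : 0 <= A%:R :> R by lra.
    nra.
  by rewrite ler_pM2l ?mulr_gt0 in h4.
set S := pair_sum (Fwin (Gamma_set L) N) f in main *.
have -> : Q - S / C%:R = (Q * C%:R - S) / C%:R.
  by rewrite mulrBl mulfK // gt_eqF.
rewrite normrM normfV (gtr0_norm Cr0) ler_pdivrMr // distrC.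
apply: le_trans main _.
have -> : e = eps + eps by rewrite /eps -splitr.
lra.
Qed.
Lemma poly_aux A : (6 <= A)%N -> (A * (A.+1 * (2 * A).+1) <= 12 * (A ^ 3 - A))%N.
Proof. move=> h; nia. Qed.

Lemma gamma_dens0 (R : realType) L : dens_seq R (Gamma_set L) @ \oo --> (0 : R).
Proof.
apply/cvgrPdist_le => e e0.
set A0 := maxn 6 (Num.trunc (6 / e)).+1.
have hA0 : 6 / e < A0%:R.
  apply: lt_le_trans (truncnS_gt _) _; rewrite ler_nat; exact: leq_maxr.
have A06 : (6 <= A0)%N by exact: leq_maxl.
apply: filterS (nbhs_infty_ge (A0`! - A0 + 3)) => N hN.
have [A [A3 hAN hNA]] := @blockA N ltac:(lia).
have A0A : (A0 <= A)%N.
  by apply: (@blockA_ge A0 A N) => //; [lia | move: hN; clear; lia].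
have A6 : (6 <= A)%N by apply: leq_trans A0A.
have hC := @C_upper L N A A3 hNA.
set C := size (Fwin (Gamma_set L) N) in hC *.
have key : (A * C <= 12 * N)%N.
  apply: leq_trans (_ : A * (A.+1 * (2 * A).+1) <= _)%N; first by rewrite leq_mul2l hC orbT.
  apply: leq_trans (@poly_aux A A6) _.
  have := @fact_cube A A6; move: hAN; set F := A`!; set G := (A ^ 3)%N; clear; lia.
have N0 : (0 < N)%N by lia.
have Nr : 0 < (2 * N)%:R :> R by rewrite ltr0n; lia.
rewrite /dens_seq sub0r normrN ger0_norm ?divr_ge0 // ler_pdivrMr //.
have h6 : 6 < e * A%:R.
  rewrite -ltr_pdivrMl // mulrC; apply: lt_le_trans hA0 _; by rewrite ler_nat.
have keyr : A%:R * C%:R <= 12 * N%:R :> R.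
  by rewrite -natrM -[12]/(12%:R) -natrM ler_nat.
have Cr : 0 <= C%:R :> R by [].
rewrite natrM.
have -> : (2%:R : R) = 2 by [].
nra.
Qed.
Definition tent (R : realType) (k : nat) (x : R) : R := Num.max 0 (1 - k.+1%:R * `|x|).
Arguments tent {R}.

Lemma tent_cont (R : realType) k : continuous (tent k : R -> R).
Proof.
rewrite (_ : tent k = (fun=> (0:R)) \max (fun x : R => 1 - k.+1%:R * `|x|)); last first.
  by apply: funext.
apply: max_fun_continuous.
- exact: cst_continuous.
- move=> y; apply: cvgB; first exact: cvg_cst.
  by apply: cvgM; [exact: cvg_cst | exact: norm_continuous].
Qed.

Lemma tent_ge0 (R : realType) k (x : R) : 0 <= tent k x.
Proof. by rewrite /tent le_max lexx. Qed.

Lemma tent_out (R : realType) k (x : R) : 1 <= `|x| -> tent k x = 0.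
Proof.
move=> h; rewrite /tent max_l // subr_le0.
by apply: le_trans h _; rewrite ler_peMl // -natr1 lerDr.
Qed.

Lemma tent_Cc (R : realType) k : Cc (tent k : R -> R).
Proof.
split; first exact: tent_cont.
by exists 1 => x hx; apply: tent_out; exact: ltW.
Qed.

Lemma tent_int (R : realType) k (t : int) : tent k (t%:~R : R) = (t == 0)%:R.
Proof.
have [->|t0] := eqVneq t 0.
  by rewrite /tent normr0 mulr0 subr0 max_r.
apply: tent_out; rewrite -intr_norm -[1]/((1%:Z)%:~R) ler_int; lia.
Qed.

Lemma pair_tent (R : realType) k (s : seq int) : uniq s ->
  pair_sum s (tent k : R -> R) = (size s)%:R.
Proof.
move=> us; rewrite /pair_sum -sum1_size natr_sum big_seq [RHS]big_seq.
apply: eq_bigr => x hx.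
rewrite (bigD1_seq x) //= tent_int subrr eqxx big1_seq ?addr0 // => y /andP[hyx _].
by rewrite tent_int subr_eq0 eq_sym (negbTE hyx).
Qed.

Lemma dens_tent (R : realType) L k :
  dens_autocorr_seq L (tent k : R -> R) = dens_seq R L.
Proof.
by apply: funext => n; rewrite /dens_autocorr_seq /dens_seq pair_tent // uniq_Fwin.
Qed.
Lemma dens_and_gamma (R : realType) L (gamma : {measure set R -> \bar R}) :
  vague_cvg (dens_autocorr_seq L) gamma ->
  exists d : R, dens_seq R L @ \oo --> d /\ gamma [set 0] = d%:E.
Proof.
move=> hv.
have [int0 cv0] := hv _ (tent_Cc R 0).
set d := fine (\int[gamma]_x (tent 0 x)%:E) in cv0.
have hd : dens_seq R L @ \oo --> d by rewrite -(dens_tent R L 0).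
exists d; split => //.
have hk : forall k, (\int[gamma]_x (tent k x)%:E)%E = d%:E.
  move=> k; have [ik cvk] := hv _ (tent_Cc R k).
  rewrite dens_tent in cvk.
  have e : fine (\int[gamma]_x (tent k x)%:E) = d.
    exact: (cvg_unique _ cvk hd).
  by rewrite -e fineK //; exact: integrable_fin_num.
have mf_ : forall n, measurable_fun (U:=measurable_realfun.constructive_ereal_extended__canonical__measurable_structure_SigmaRing R) [set: R] (EFin \o tent n).
  by move=> n; apply/measurable_realfun.measurable_EFinP; exact: measurable_realfun.continuous_measurable_fun (tent_cont R n).
have mf : measurable_fun (U:=measurable_realfun.constructive_ereal_extended__canonical__measurable_structure_SigmaRing R) [set: R] (EFin \o (\1_[set (0:R)] : R -> R)).
  by apply/measurable_realfun.measurable_EFinP; exact: measurable_realfun.measurable_indic.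
have f_f : \forall x \ae gamma, setT x ->
    (fun n => (tent n x)%:E) @ \oo --> (\1_[set (0:R)] x)%:E.
  apply: aeW => x _.
  have [->|x0] := eqVneq x 0.
    rewrite indicE mem_set //; apply: cvg_near_cst; apply: nearW => n.
    by rewrite /tent normr0 mulr0 subr0 max_r.
  rewrite indicE memNset //; last by move=> /= e; rewrite e eqxx in x0.
  apply: cvg_near_cst; apply: filterS (nbhs_infty_ge (Num.trunc (`|x|^-1))) => n hn.
  congr (_%:E); apply: (@max_l _ _ 0); rewrite subr_le0.
  have xp : 0 < `|x| by rewrite normr_gt0.
  rewrite -ler_pdivrMr // div1r; apply: ltW; apply: lt_le_trans (truncnS_gt _) _.
  by rewrite ler_nat.
have f_g : \forall x \ae gamma, forall n, setT x ->
    (`|(tent n x)%:E| <= (tent 0 x)%:E)%E.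
  apply: aeW => x n _; rewrite lee_fin ger0_norm ?tent_ge0 //.
  rewrite /tent ge_max le_max lexx /= le_max; apply/orP; right.
  by rewrite lerD2l lerN2 mul1r ler_peMl // -natr1 lerDr.
have := @dominated_convergence _ _ R gamma setT measurableT (fun n x => (tent n x)%:E)
  (fun x => (\1_[set (0:R)] x)%:E) (fun x => (tent 0 x)%:E) mf_ mf f_f int0 f_g.
case=> _ _ hcv.
rewrite integral_indic // setIT in hcv.
have : [sequence (\int[gamma]_(x in setT) (tent n x)%:E)%E]_n = (fun=> d%:E).
  by apply: funext => n /=; rewrite hk.
move=> e; rewrite e in hcv.
apply/esym; apply: (cvg_unique (@ereal_hausdorff R) _ hcv).
exact: cvg_cst.
Qed.
Lemma reldense_R1 (R : realType) L : rel_dense R L ->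
  exists R1 : nat, forall a, ((2 * a).+1 <= (size (Fwin L a) + 1) * R1)%N.
Proof.
case=> R0 [R00 hR]; exists (Num.trunc R0).+1.
apply: dense_count => // b.
have [k [hk /andP[h1 h2]]] := hR (b%:~R).
exists k; split => //; apply/andP; split; first by rewrite -(ler_int R).
rewrite -(ltr_int R) intrD; apply: le_lt_trans h2 _; rewrite ltrD2l.
exact: truncnS_gt.
Qed.

Lemma dens_pos (R : realType) L (R1 : nat) (d : R) :
  (forall a, ((2 * a).+1 <= (size (Fwin L a) + 1) * R1)%N) ->
  dens_seq R L @ \oo --> d -> 0 < d.
Proof.
move=> hd hc.
have R1p : (0 < R1)%N by have := hd 0%N; set c := size _; nia.
have R1r : 0 < (2 * R1)%:R :> R by rewrite ltr0n; lia.
apply: lt_le_trans (_ : ((2 * R1)%:R)^-1 <= d); first by rewrite invr_gt0.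
have <- : lim (dens_seq R L @ \oo) = d by apply: cvg_lim.
apply: limr_ge; first by apply/cvg_ex; exists d.
apply: filterS (nbhs_infty_ge R1.+1) => a ha.
have ar : 0 < (2 * a)%:R :> R by rewrite ltr0n; lia.
rewrite /dens_seq ler_pdivlMr // mulrC ler_pdivrMr // -natrM ler_nat.
have := hd a; set c := size _; clear -ha; nia.
Qed.

Lemma ratio_bound (R : realType) L (f : R -> R) (d I : R) :
  d != 0 -> dens_seq R L @ \oo --> d -> dens_autocorr_seq L f @ \oo --> I ->
  forall eps : R, 0 < eps -> exists a0, forall a, (a0 <= a)%N ->
    `|pair_sum (Fwin L a) f - (d^-1 * I) * (size (Fwin L a))%:R| <=
      eps * (size (Fwin L a))%:R.
Proof.
move=> d0 hd hI eps e0.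
have hr : (fun a => dens_autocorr_seq L f a * (dens_seq R L a)^-1) @ \oo --> I * d^-1.
  by apply: cvgM => //; apply: cvgV.
move/cvgrPdist_le: hr => /(_ eps e0) [a0 _ ha0].
exists (maxn a0 1) => a ha.
have a0a : (a0 <= a)%N by apply: leq_trans ha; exact: leq_maxl.
have a1 : (0 < a)%N by apply: leq_trans ha; exact: leq_maxr.
have := ha0 a a0a.
rewrite /dens_autocorr_seq /dens_seq.
set P := pair_sum _ _; set c := size _.
have ar : (2 * a)%:R != 0 :> R by rewrite pnatr_eq0; lia.
rewrite invf_div mulrA divfK //.
have [c0|cpos] := posnP c.
  have : Fwin L a = [::] by apply/eqP; rewrite -size_eq0 -/c c0.
  by rewrite /P => ->; rewrite c0 /pair_sum big_nil !mulr0 subrr normr0.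
have cr : 0 < c%:R :> R by rewrite ltr0n.
move=> h.
have -> : P - d^-1 * I * c%:R = c%:R * (P / c%:R - I * d^-1).
  have cn : c%:R != 0 :> R by rewrite gt_eqF.
  by field; rewrite cn d0.
rewrite normrM (gtr0_norm cr) mulrC ler_wpM2r //.
by rewrite distrC.
Qed.
Theorem theorem6p1 (R : realType) (L : set int)
  (gamma : {measure set R -> \bar R}) :
  rel_dense R L ->
  vague_cvg (dens_autocorr_seq L) gamma ->
  exists d : R,
    [/\ dens_seq R L @ \oo --> d,
        gamma [set 0] = d%:E,
        d != 0,
        dens_seq R (Gamma_set L) @ \oo --> (0 : R) &
        forall f : R -> R, Cc f ->
          count_autocorr_seq (Gamma_set L) f @ \oo -->
            d^-1 * fine (\int[gamma]_x (f x)%:E)].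
Proof.
move=> hrd hv.
have [R1 hd] := @reldense_R1 R L hrd.
have [d [hdc hg]] := @dens_and_gamma R L gamma hv.
have dpos := @dens_pos R L R1 d hd hdc.
exists d; split => //.
- by rewrite gt_eqF.
- exact: gamma_dens0.
move=> f hf.
have [_ hI] := hv f hf.
case: hf => _ [M hM].
set W := (Num.trunc `|M|).+1.
apply: (@count_cvg R L f W R1) => //.
- move=> t ht; apply: hM; apply: le_lt_trans ht.
  exact: le_trans (ler_norm M) (ltW (truncnS_gt _)).
- exact: (@ratio_bound R L f d _ (lt0r_neq0 dpos) hdc hI).
Qed.
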